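(* Let $\lambda_1\ge0$ and $\lambda_2=0$. Let $P_n$ be the monic orthogonal polynomials for $\langle f,g\rangle_F=\int_{\mathbb R}fg\,e^{-x^4}dx$, $k_n=\langle P_n,P_n\rangle_F$, and let $Q_n$ be the monic orthogonal polynomials for $\langle f,g\rangle_S=\int_{\mathbb R}fg\,e^{-x^4}dx+\lambda_1 f(0)g(0)$, $\widehat k_n=\langle Q_n,Q_n\rangle_S$. Then $Q_0(x)=1$, $Q_1(x)=x$, and for all $n\ge1$, $$xP_n(x)=Q_{n+1}(x)+a_nQ_{n-1}(x),\qquad xQ_n(x)=P_{n+1}(x)+b_nP_{n-1}(x),$$ where $a_n=\dfrac{k_n}{\widehat k_{n-1}}$ and $b_n=\dfrac{\widehat k_n}{k_{n-1}}$.
   Context: All polynomials are real; ''monic orthogonal polynomials'' means $\deg P_n=\deg Q_n=n$ with leading coefficient $1$ and orthogonality to all polynomials of lower degree in the respective inner product. *)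

(* Defs.v *)
From HB Require Import structures.
From mathcomp Require Import all_boot all_order all_algebra.
From mathcomp Require Import all_classical all_reals all_analysis.
Set Implicit Arguments. Unset Strict Implicit. Unset Printing Implicit Defensive.
Import Order.TTheory GRing.Theory Num.Theory.
Local Open Scope ring_scope.

Definition ipF (R : realType) (f g : {poly R}) : R :=
  Rintegral (@lebesgue_measure R) setT
    (fun x : R => f.[x] * g.[x] * expR (- x ^+ 4)).

Definition ipS (R : realType) (l1 l2 : R) (f g : {poly R}) : R :=
  ipF f g + l1 * f.[0] * g.[0] + l2 * (f^`()).[0] * (g^`()).[0].

Definition monic_OPS (R : realType) (ip : {poly R} -> {poly R} -> R)
    (P : nat -> {poly R}) : Prop :=
  forall n : nat,
    size (P n) = n.+1 /\ P n \is monic /\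
    (forall q : {poly R}, (size q <= n)%N -> ip (P n) q = 0).

(* Main.v *)
Require Import Defs.
From HB Require Import structures.
From mathcomp Require Import all_boot all_order all_algebra.
From mathcomp Require Import all_classical all_reals all_analysis.
From mathcomp Require Import ring lra zify measurable_realfun gauss_integral.
Set Implicit Arguments. Unset Strict Implicit. Unset Printing Implicit Defensive.
Import Order.TTheory GRing.Theory Num.Theory.
Import numFieldNormedType.Exports.
Local Open Scope classical_set_scope.
Local Open Scope ring_scope.

Section Ana.
Context (R : realType).
Local Notation mu := (@lebesgue_measure R).
Definition wF (x : R) := expR (- x ^+ 4).

Lemma measurable_wF : measurable_fun setT wF.
Proof. by apply: measurableT_comp => //; exact: measurableT_comp. Qed.

Lemma mono_bound (n : nat) (x : R) :
  `|x ^+ n * wF x| <= `|((1 + (n.+1)`!%:R) * expR 1) * gauss_fun x|.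
Proof.
rewrite normrM normrX (ger0_norm (expR_ge0 _)).
rewrite [X in _ <= X]ger0_norm; last first.
  apply: mulr_ge0; last exact: gauss_fun_ge0.
  by apply: mulr_ge0; [apply: addr_ge0 | exact: expR_ge0].
set y := x ^+ 2.
have y0 : 0 <= y by rewrite /y sqr_ge0.
have h1 : `|x| ^+ n <= 1 + y ^+ n.+1.
  have [le1|gt1] := leP `|x| 1.
    have := exprn_ile1 n (normr_ge0 x) le1.
    have : 0 <= y ^+ n.+1 by rewrite exprn_ge0.
    lra.
  have : `|x| ^+ n <= `|x| ^+ (2 * n.+1).
    by rewrite ler_eXn2l //; lia.
  rewrite exprM (real_normK (num_real x)) -/y.
  have : 0 <= 1 :> R by [].
  lra.
have h2 : y ^+ n.+1 <= (n.+1)`!%:R * expR y.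
  have := expR_ge1Dxn n y0.
  have Fp : 0 < (n.+1)`!%:R :> R by rewrite ltr0n fact_gt0.
  have e : y ^+ n.+1 = (n.+1)`!%:R * (y ^+ n.+1 / (n.+1)`!%:R).
    by rewrite mulrC divfK // gt_eqF.
  rewrite {2}e ler_pM2l //.
  set t := (y ^+ n.+1 / _). lra.
have h3 : wF x <= expR 1 * expR (- (2 * y)).
  rewrite -expRD ler_expR /y.
  have -> : x ^+ 4 = (x ^+ 2) ^+ 2 by rewrite -exprM.
  have := sqr_ge0 (x ^+ 2 - 1).
  set z := x ^+ 2. nra.
have ey1 : 1 <= expR y by rewrite -expR0 ler_expR.
have hA : `|x| ^+ n <= (1 + (n.+1)`!%:R) * expR y.
  have : 0 <= (n.+1)`!%:R :> R by [].
  nra.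
apply: le_trans (ler_pM (exprn_ge0 _ (normr_ge0 x)) (expR_ge0 _) hA h3) _.
have E : expR (- y) = expR y * expR (- (2 * y)) by rewrite -expRD; congr expR; ring.
rewrite /gauss_fun -/y E le_eqVlt; apply/orP; left; apply/eqP; ring.
Qed.

Lemma measurable_polyw (p : {poly R}) : measurable_fun setT (fun x => p.[x] * wF x).
Proof.
apply: measurable_funM; last exact: measurable_wF.
apply: continuous_measurable_fun; exact: continuous_horner.
Qed.

Lemma int_mono n : mu.-integrable setT (EFin \o (fun x => x ^+ n * wF x)).
Proof.
apply: le_integrable; last exact: (integrableZl measurableT ((1 + (n.+1)`!%:R) * expR 1) integrableT_gauss).
  by [].
  apply/measurable_EFinP; apply: measurable_funM; last exact: measurable_wF.
  exact: exprn_measurable.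
move=> x _ /=; rewrite lee_fin; exact: mono_bound.
Qed.

Lemma int_poly (p : {poly R}) : mu.-integrable setT (EFin \o (fun x => p.[x] * wF x)).
Proof.
have H : mu.-integrable setT (fun x => \sum_(i < size p) ((p`_i)%:E * (EFin \o (fun y : R => (y ^+ i * wF y)%R)) x))%E.
  apply: integrable_sum => // i _; apply: integrableZl => //; exact: int_mono.
apply: eq_integrable H => // x _ /=; rewrite sumEFin horner_coef mulr_suml; congr EFin.
by apply: eq_bigr => i _; rewrite mulrA.
Qed.


Lemma roots_seq (p : {poly R}) : p != 0 -> exists s : seq R, forall x, root p x -> x \in s.
Proof.
move: {2}(size p) (leqnn (size p)) => n; elim: n p => [|n IH] p sp pn0.
  by move: pn0; rewrite -size_poly_eq0; move: sp; rewrite leqn0 => /eqP ->.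
have [[a ra]|nr] := pselect (exists a, root p a); last first.
  by exists [::] => x rx; exfalso; apply: nr; exists x.
have [q pq] := factor_theorem p a ra.
have qn0 : q != 0 by apply: contraNneq pn0 => q0; rewrite pq q0 mul0r.
have sq : (size q <= n)%N.
  by move: sp; rewrite pq size_Mmonic ?monicXsubC // size_XsubC addn2.
have [s Hs] := IH q sq qn0.
exists (a :: s) => x; rewrite pq rootM root_XsubC in_cons => /orP[/Hs ->|->].
  by rewrite orbT.
by [].
Qed.

Lemma negl_seq (s : seq R) : mu.-negligible [set x | x \in s].
Proof.
elim: s => [|a s IH].
  by apply: (negligibleS _ (negligible_set0 mu)) => x /=; rewrite in_nil.
have h1 : mu.-negligible [set a].
  by apply/negligibleP; [exact: measurable_set1 | exact: lebesgue_measure_set1].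
apply: negligibleS (negligibleU h1 IH).
by move=> x /=; rewrite in_cons => /orP[/eqP ->|xs]; [left|right].
Qed.

Definition Iw (p : {poly R}) : R := Rintegral mu setT (fun x => p.[x] * wF x).

Lemma Iw_add p q : Iw (p + q) = Iw p + Iw q.
Proof.
rewrite /Iw -RintegralD //; try exact: int_poly.
by apply: eq_Rintegral => x _; rewrite hornerD mulrDl.
Qed.

Lemma Iw_scale c p : Iw (c *: p) = c * Iw p.
Proof.
rewrite /Iw -RintegralZl //; last exact: int_poly.
by apply: eq_Rintegral => x _; rewrite hornerZ mulrA.
Qed.

Lemma Iw_sq_ge0 p : 0 <= Iw (p * p).
Proof.
apply: Rintegral_ge0 => x _; rewrite hornerM mulr_ge0 ?expR_ge0 //.
by rewrite -expr2 sqr_ge0.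
Qed.

Lemma wF_N x : wF (- x) = wF x.
Proof. by rewrite /wF (_ : 4%N = (2 * 2)%N) // !exprM sqrrN. Qed.

Lemma Iw_refl p : Iw (p \Po (- 'X)) = Iw p.
Proof.
rewrite /Iw /Rintegral; congr fine.
have mN : measurable_fun [set: measurableTypeR R] (-%R : measurableTypeR R -> measurableTypeR R) by exact: measurable_funN.
set f := (fun x => (p.[x] * wF x)%:E).
transitivity (\int[mu]_(x in (-%R : measurableTypeR R -> measurableTypeR R) @^-1` setT) (f \o -%R) x)%E.
  by rewrite preimage_setT; apply: eq_integral => x _; rewrite /f /= horner_comp hornerN hornerX wF_N.
rewrite -integral_pushforward //.
- apply: eq_measure_integral => A mA _; exact: lebesgue_measureN.
- by apply/measurable_EFinP; exact: measurable_polyw.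
- rewrite preimage_setT.
  apply: eq_integrable (int_poly (p \Po (- 'X))) => // x _.
  by rewrite /f /= horner_comp hornerN hornerX wF_N.
Qed.

Lemma Iw_nondeg p : Iw (p * p) = 0 -> p = 0.
Proof.
move=> H; apply/eqP; apply: contraT => pn0.
set g := fun x => (p * p).[x] * wF x.
have g0 : forall x, 0 <= g x.
  by move=> x; rewrite /g hornerM mulr_ge0 ?expR_ge0 // -expr2 sqr_ge0.
have fin : (\int[mu]_(x in setT) (g x)%:E)%E \is a fin_num.
  exact: integrable_fin_num (int_poly (p * p)).
have J0 : (\int[mu]_(x in setT) `|(g x)%:E|)%E = 0.
  under eq_integral do rewrite abse_EFin ger0_norm //.
  by rewrite -(fineK fin); move: H; rewrite /Iw /Rintegral -/g => ->.
have /ae_eq_integral_abs := J0.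
move=> /(_ measurableT) Hae.
have {}Hae := Hae (proj2 (measurable_EFinP _ _) (measurable_polyw (p * p))).
have [N [mN N0 sub]] : mu.-negligible (~` [set x | setT x -> (g x)%:E = 0%E]) := Hae.
have [s Hs] := roots_seq pn0.
have negT : mu.-negligible [set: R].
  apply: (negligibleS (A := N `|` [set x | x \in s])); last first.
    apply: negligibleU => //; last exact: negl_seq.
    by exists N; split.
  move=> x _; have [px0|px0] := eqVneq p.[x] 0.
    by right; apply: Hs; rewrite /root px0.
  left; apply: sub => /= /(_ I) /eqP; rewrite eqe => /eqP.
  rewrite /g hornerM; apply/eqP; rewrite mulf_neq0 // ?mulf_neq0 //.
  by rewrite /wF gt_eqF // expR_gt0.
have [A [mA A0 TA]] := negT.
have : (mu `[0%R, 1%R] <= mu A)%E.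
  apply: le_measure; rewrite ?inE //.
  by move=> x _; apply: TA.
rewrite A0 lebesgue_measure_itv /= lte_fin ltr01 /= oppr0 adde0.
by rewrite lee_fin ler10.
Qed.

End Ana.
Section Alg.
Context (R : realType).
Implicit Types p q f g h : {poly R}.

Record goodip (ip : {poly R} -> {poly R} -> R) : Prop := GoodIp {
  ip_sym : forall f g, ip f g = ip g f;
  ip_add : forall f g h, ip (f + g) h = ip f h + ip g h;
  ip_scale : forall c f h, ip (c *: f) h = c * ip f h;
  ip_nondeg : forall f, ip f f = 0 -> f = 0;
  ip_refl : forall f g, ip (f \Po (- 'X)) (g \Po (- 'X)) = ip f g }.

Lemma compN p q : (- p) \Po q = - (p \Po q).
Proof. by rewrite -scaleN1r comp_polyZ scaleN1r. Qed.

Lemma compNX_inv p : (p \Po (- 'X)) \Po (- 'X) = p.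
Proof. by rewrite -comp_polyA compN comp_polyX opprK comp_polyXr. Qed.

Lemma size_compNX p : size (p \Po (- 'X)) = size p.
Proof. by apply: size_comp_poly2; rewrite size_polyN size_polyX. Qed.

Lemma monic_coef p n : size p = n.+1 -> p \is monic ->
  p`_n = 1 /\ forall j, (n < j)%N -> p`_j = 0.
Proof.
move=> sp /monicP; rewrite lead_coefE sp /= => ->; split => // j nj.
by apply: nth_default; rewrite sp.
Qed.

Lemma size_sub_monic p q n : size p = n.+1 -> p \is monic ->
  size q = n.+1 -> q \is monic -> (size (p - q)%R <= n)%N.
Proof.
move=> sp mp sq mq; apply/leq_sizeP => j nj; rewrite coefB.
have [p1 p2] := monic_coef sp mp; have [q1 q2] := monic_coef sq mq.
move: nj; rewrite leq_eqVlt => /orP[/eqP <-|nj]; first by rewrite p1 q1 subrr.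
by rewrite p2 // q2 // subrr.
Qed.

Variable ip : {poly R} -> {poly R} -> R.
Hypothesis H : goodip ip.

Lemma ip_addr f g h : ip f (g + h) = ip f g + ip f h.
Proof. by rewrite ip_sym // ip_add // ![ip _ f]ip_sym. Qed.
Lemma ip_scaler c f h : ip f (c *: h) = c * ip f h.
Proof. by rewrite ip_sym // ip_scale // ip_sym. Qed.
Lemma ip_oppl f h : ip (- f) h = - ip f h.
Proof. by rewrite -scaleN1r ip_scale // mulN1r. Qed.
Lemma ip_oppr f h : ip f (- h) = - ip f h.
Proof. by rewrite -scaleN1r ip_scaler // mulN1r. Qed.
Lemma ip_subl f g h : ip (f - g) h = ip f h - ip g h.
Proof. by rewrite ip_add // ip_oppl. Qed.
Lemma ip_subr f g h : ip f (g - h) = ip f g - ip f h.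
Proof. by rewrite ip_addr // ip_oppr. Qed.

Variable Q : nat -> {poly R}.
Hypothesis HQ : monic_OPS ip Q.

Lemma orthQ k q : (size q <= k)%N -> ip (Q k) q = 0.
Proof. by have [_ [_ ]] := HQ k; apply. Qed.
Lemma orthQ' k q : (size q <= k)%N -> ip q (Q k) = 0.
Proof. by move=> sq; rewrite ip_sym // orthQ. Qed.

Lemma Q_neq0 n : Q n != 0.
Proof. by rewrite -size_poly_eq0; have [-> _] := HQ n. Qed.

Lemma kQ_neq0 n : ip (Q n) (Q n) != 0.
Proof. by apply/eqP => /(ip_nondeg H) /eqP; apply/negP; exact: Q_neq0. Qed.

Lemma span0 n (r : {poly R}) : (size r <= n)%N -> (forall j, (j < n)%N -> ip r (Q j) = 0) -> r = 0.
Proof.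
elim: n r => [|n IH] r sr Hr.
  by apply/eqP; rewrite -size_poly_eq0 -leqn0.
have [sQ [mQ _]] := HQ n.
have [Q1 Q2] := monic_coef sQ mQ.
set c := r`_n.
have sr' : (size (r - c *: Q n)%R <= n)%N.
  apply/leq_sizeP => j nj; rewrite coefB coefZ.
  move: nj; rewrite leq_eqVlt => /orP[/eqP <-|nj]; first by rewrite Q1 mulr1 subrr.
  by rewrite Q2 // mulr0 subr0; apply: nth_default; exact: leq_trans sr nj.
have r'0 : r - c *: Q n = 0.
  apply: (IH _ sr') => j jn; rewrite ip_subl // ip_scale // Hr; last by apply: ltnW.
  by rewrite orthQ ?mulr0 ?subr0 //; have [-> _] := HQ j.
have rE : r = c *: Q n by apply/eqP; rewrite -subr_eq0 r'0.
have := Hr n (ltnSn n); rewrite rE ip_scale // => /eqP.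
rewrite mulf_eq0 (negbTE (kQ_neq0 n)) orbF => /eqP ->.
by rewrite scale0r.
Qed.

Lemma parity n : Q n \Po (- 'X) = (-1) ^+ n *: Q n.
Proof.
have [sQ [mQ _]] := HQ n.
set T := (-1) ^+ n *: (Q n \Po (- 'X)).
have sgn : (-1) ^+ n * (-1) ^+ n = 1 :> R by rewrite -exprMn mulrNN mulr1 expr1n.
suff TQ : T - Q n = 0.
  have : T = Q n by apply/eqP; rewrite -subr_eq0 TQ.
  by move=> TE; rewrite -{2}TE /T scalerA sgn scale1r.
apply: (@span0 n).
  set r := Q n - 'X^n.
  have sr : (size r <= n)%N by apply: size_sub_monic => //; rewrite ?size_polyXn ?monicXn.
  have -> : T - Q n = (-1) ^+ n *: (r \Po (- 'X)) - r.
    have QE : Q n = r + 'X^n by rewrite /r subrK.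
    have XE : 'X^n \Po (- 'X) = (-1 : R) ^+ n *: ('X^n : {poly R}).
      by rewrite comp_Xn_poly -scaleN1r exprZn.
    rewrite /T QE comp_polyD XE scalerDr scalerA sgn scale1r.
    set A := (-1) ^+ n *: _.
    ring.
  apply: leq_trans (size_polyD _ _) _; rewrite size_polyN geq_max sr andbT.
  by apply: leq_trans (size_scale_leq _ _) _; rewrite size_compNX.
move=> j jn; rewrite ip_subl // orthQ ?subr0; last by have [-> _] := HQ j.
rewrite /T ip_scale // -(ip_refl H) compNX_inv orthQ ?mulr0 //.
by rewrite size_compNX; have [-> _] := HQ j.
Qed.

End Alg.

Section Three.
Context (R : realType).
Variables (ip1 ip2 : {poly R} -> {poly R} -> R) (A B : nat -> {poly R}).
Hypotheses (H1 : goodip ip1) (H2 : goodip ip2).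
Hypotheses (HA : monic_OPS ip1 A) (HB : monic_OPS ip2 B).
Hypothesis adj : forall f g, ip2 ('X * f) g = ip1 f ('X * g).

Lemma size_XM (p : {poly R}) : p != 0 -> size ('X * p) = (size p).+1.
Proof. by move=> p0; rewrite mulrC size_mulX. Qed.

Lemma three_term n : (1 <= n)%N ->
  'X * A n = B n.+1 + (ip1 (A n) (A n) / ip2 (B n.-1) (B n.-1)) *: B n.-1.
Proof.
case: n => [//|m] _ /=.
set a := _ / _.
have [sA [mA _]] := HA m.+1.
have [sB2 [mB2 _]] := HB m.+2.
have [sB1 [mB1 _]] := HB m.+1.
have [sB0 [mB0 _]] := HB m.
have kh0 := kQ_neq0 H2 HB m.
suff r0 : 'X * A m.+1 - B m.+2 - a *: B m = 0.
  by apply/eqP; rewrite -subr_eq0 opprD addrA r0.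
apply: (span0 H2 HB (n := m.+2)).
  apply: leq_trans (size_polyD _ _) _; rewrite size_polyN geq_max; apply/andP; split.
    apply: size_sub_monic => //; last by rewrite monicMl ?monicX.
    by rewrite size_XM ?sA // -size_poly_eq0 sA.
  by apply: leq_trans (size_scale_leq _ _) _; rewrite sB0.
move=> j; rewrite ltnS leq_eqVlt => /orP[/eqP ->|].
  (* j = m+1 : parity *)
  rewrite !(ip_subl H2) (ip_scale H2) adj.
  rewrite (orthQ HB (k := m.+2)) ?sB1 // (orthQ' H2 HB (k := m.+1)) ?sB0 // mulr0 !subr0.
  set c := ip1 _ _.
  have cE : c = - c.
    rewrite {1}/c -(ip_refl H1) (parity H1 HA) comp_polyM comp_polyX (parity H2 HB).
    rewrite (ip_scale H1) mulNr -scalerAr (ip_oppr H1) (ip_scaler H1) mulrN mulrA.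
    by rewrite -exprMn mulrNN mulr1 expr1n mul1r.
  by apply/eqP; rewrite -[_ == _]/(c == 0); move: cE => /eqP; rewrite -addr_eq0 -mulr2n mulrn_eq0.
rewrite ltnS leq_eqVlt => /orP[/eqP ->|jm].
  rewrite !(ip_subl H2) (ip_scale H2) adj.
  rewrite (orthQ HB (k := m.+2)) ?sB0 // subr0.
  have -> : ip1 (A m.+1) ('X * B m) = ip1 (A m.+1) (A m.+1).
    have : ip1 (A m.+1) ('X * B m - A m.+1) = 0.
      apply: (orthQ HA); apply: size_sub_monic => //; last by rewrite monicMl ?monicX.
      by rewrite size_XM ?sB0 // -size_poly_eq0 sB0.
    by rewrite (ip_subr H1) => /eqP; rewrite subr_eq0 => /eqP.
  by rewrite /a divfK // subrr.
have [sBj _] := HB j.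
rewrite !(ip_subl H2) (ip_scale H2) adj.
rewrite (orthQ HA); last by rewrite size_XM ?sBj // -size_poly_eq0 sBj.
rewrite (orthQ HB (k := m.+2)) ?sBj; last lia.
rewrite (orthQ HB (k := m)) ?sBj //.
by rewrite mulr0 !subr0.
Qed.

End Three.

Section Inst.
Context (R : realType).
Implicit Types f g : {poly R}.

Lemma ipF_Iw f g : ipF f g = Iw (f * g).
Proof. by rewrite /ipF /Iw; apply: eq_Rintegral => x _; rewrite hornerM. Qed.

Lemma goodF : goodip (@ipF R).
Proof.
split.
- by move=> f g; rewrite !ipF_Iw mulrC.
- by move=> f g h; rewrite !ipF_Iw mulrDl Iw_add.
- by move=> c f h; rewrite !ipF_Iw -scalerAl Iw_scale.
- by move=> f; rewrite ipF_Iw; exact: Iw_nondeg.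
- by move=> f g; rewrite !ipF_Iw -comp_polyM Iw_refl.
Qed.

Lemma adjF f g : ipF ('X * f) g = ipF f ('X * g).
Proof. by rewrite !ipF_Iw; congr Iw; rewrite mulrCA mulrA. Qed.

Lemma ipS0 (l1 : R) f g : ipS l1 0 f g = ipF f g + l1 * f.[0] * g.[0].
Proof. by rewrite /ipS mul0r mul0r addr0. Qed.

Lemma goodS (l1 : R) : 0 <= l1 -> goodip (ipS l1 0).
Proof.
move=> l10; have GF := goodF.
split.
- by move=> f g; rewrite !ipS0 (ip_sym GF) mulrAC.
- by move=> f g h; rewrite !ipS0 (ip_add GF) hornerD; ring.
- by move=> c f h; rewrite !ipS0 (ip_scale GF) hornerZ; ring.
- move=> f; rewrite ipS0 => h0; apply: (ip_nondeg GF).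
  have h1 : 0 <= ipF f f by rewrite ipF_Iw Iw_sq_ge0.
  have h2 : 0 <= l1 * f.[0] * f.[0] by rewrite -mulrA mulr_ge0 // -expr2 sqr_ge0.
  lra.
- by move=> f g; rewrite !ipS0 (ip_refl GF) !horner_comp hornerN hornerX oppr0.
Qed.

End Inst.

Theorem mainTheorem2 (R : realType) (l1 l2 : R) (P Q : nat -> {poly R}) :
  0 <= l1 -> l2 = 0 ->
  monic_OPS (@ipF R) P ->
  monic_OPS (ipS l1 l2) Q ->
  let k := fun n => ipF (P n) (P n) in
  let kh := fun n => ipS l1 l2 (Q n) (Q n) in
  Q 0%N = 1 /\ Q 1%N = 'X /\
  (forall n : nat, (1 <= n)%N ->
     'X * P n = Q n.+1 + (k n / kh n.-1) *: Q n.-1 /\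
     'X * Q n = P n.+1 + (kh n / k n.-1) *: P n.-1).
Proof.
move=> l10 l20 HP HQ k kh; subst l2.
have GF := @goodF R.
have GS := goodS l10.
split.
  have [s0 [m0 _]] := HQ 0%N.
  have [c1 _] := monic_coef s0 m0.
  by rewrite (size1_polyC (eq_leq s0)) c1.
split.
  have [s1 [m1 _]] := HQ 1%N.
  have sr : (size (Q 1%N - 'X)%R <= 1)%N.
    by apply: size_sub_monic; rewrite ?size_polyX ?monicX.
  set c := (Q 1%N - 'X)`_0.
  have QE : Q 1%N = 'X + c%:P by rewrite -(size1_polyC sr) addrC subrK.
  have := parity GS HQ 1.
  rewrite QE comp_polyD comp_polyX comp_polyC expr1 scaleN1r opprD => /addrI hc.
  have hc' : c = - c by apply: (@polyC_inj R); rewrite polyCN.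
  have c0 : c = 0 by lra.
  by rewrite c0 addr0.
move=> n n1; split.
  apply: (three_term GF GS HP HQ) => // f g.
  by rewrite ipS0 hornerM hornerX mul0r mulr0 mul0r addr0 adjF.
apply: (three_term GS GF HQ HP) => // f g.
by rewrite adjF ipS0 hornerM hornerX mul0r mulr0 addr0.
Qed.
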